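(* Let $L>0$, $\mathbb{T}=\mathbb{R}/L\mathbb{Z}$, let $(\gamma_k)_{k\in\mathbb{Z}}$ be positive reals, and let $u$ be the solution of the linear equation \[ u_t-u_{txx}+u_x+\mathscr{L}_\gamma(u)=0,\quad x\in\mathbb{T},\qquad u(0)=u_0. \] Assume there exist positive constants $\alpha,\beta,C$ such that (i) $|\hat{u}_{0,k}|^2\le C\gamma_k^{2\delta}$ for all $k$, where $\delta=\alpha+\beta$; (ii) $\sum_{k\in\mathbb{Z}}(1+k^2)^{2\alpha+1}\gamma_k^{2\beta}<+\infty$. Then for all $t>0$, \[ |u(t)|_{H^1}^2\le Ce^{-2\alpha}\Big(\frac{\alpha}{t}\Big)^{2\alpha}\sum_{k\in\mathbb{Z}}(1+k^2)^{2\alpha+1}\gamma_k^{2\beta}=O\Big(\frac{1}{t^{2\alpha}}\Big). \]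
   Context: For $u\in L^2(\mathbb{T})$, $\hat u_k$ is its $k$-th Fourier coefficient and $\hat u_{0,k}$ those of $u_0$; in symbols $k$ stands for the frequency $2\pi k/L$. $\mathscr{L}_\gamma$ is the Fourier multiplier $\widehat{\mathscr{L}_\gamma(u)}_k=\gamma_k\hat u_k$. The $H^1$ norm is $|u|_{H^1}^2=\sum_k(1+k^2)|\hat u_k|^2$. The solution is given by $\hat u_k(t)=e^{-\frac{\gamma_k+ik}{1+k^2}t}\hat u_k(0)$. *)

(* Defs.v *)
From Stdlib Require Import Reals ZArith.
From Coquelicot Require Import Coquelicot.
Open Scope R_scope.

(* Sums over Z of a family f : Z -> R, via the enumeration
   0, -1, 1, -2, 2, ... grouped as f n + f (-(n+1)).
   For the nonnegative families used below this is exactly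
   summability over Z and the value of the sum over Z. *)
Definition zsplit (f : Z -> R) (n : nat) : R :=
  f (Z.of_nat n) + f (- Z.of_nat (S n))%Z.
Definition ex_zseries (f : Z -> R) : Prop := ex_series (zsplit f).
Definition zSeries (f : Z -> R) : R := Series (zsplit f).

Definition freq (L : R) (k : Z) : R := 2 * PI * IZR k / L.

Definition cexp (z : C) : C := (exp (fst z) * cos (snd z), exp (fst z) * sin (snd z)).

(* Fourier coefficients of the solution of
     u_t - u_txx + u_x + L_gamma(u) = 0,  u(0) = u0,
   given the coefficients c of u0:
     hat u_k(t) = exp(-(gamma_k + i k)/(1+k^2) t) hat u_{0,k}  (k := 2 pi k / L). *)
Definition sol_coef (L : R) (gamma : Z -> R) (c : Z -> C) (t : R) (k : Z) : C :=
  Cmult (cexp ((- (gamma k) * t / (1 + (freq L k)^2),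
                - (freq L k) * t / (1 + (freq L k)^2)))) (c k).

Definition H1_term (L : R) (v : Z -> C) (k : Z) : R :=
  (1 + (freq L k)^2) * (Cmod (v k))^2.

(* Main.v *)
Require Import Defs.
From Stdlib Require Import Reals ZArith Lra.
From Coquelicot Require Import Coquelicot.
Open Scope R_scope.

Lemma exp_mono x y : x <= y -> exp x <= exp y.
Proof. intros [H|H]. left; now apply exp_increasing. subst; lra. Qed.

Lemma key q g t a : 0 < q -> 0 < g -> 0 < t -> 0 < a ->
  exp (- g * t / q) ^ 2 * Rpower g (2 * a)
  <= exp (- (2 * a)) * Rpower (a / t) (2 * a) * Rpower q (2 * a).
Proof.
  intros Hq Hg Ht Ha. unfold Rpower.
  rewrite <- !exp_plus. simpl. rewrite Rmult_1_r, <- !exp_plus.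
  apply exp_mono.
  pose proof (exp_ineq1_le (ln (g * t / (a * q)))) as H.
  rewrite exp_ln in H by (apply Rdiv_lt_0_compat; nra).
  rewrite ln_div in H by nra. rewrite !ln_mult in H by nra.
  rewrite ln_div by nra.
  assert (E : g * t / (a * q) = (g * t / q) / a) by (field; lra).
  rewrite E in H.
  assert (H2 : a * (1 + (ln g + ln t - (ln a + ln q))) <= g * t / q).
  { apply Rmult_le_compat_l with (r := a) in H; [|lra].
    replace (a * (g * t / q / a)) with (g * t / q) in H by (field; lra). exact H. }
  replace (- g * t / q + - g * t / q) with (- (2 * (g * t / q))) by (field; lra).
  nra.
Qed.

Lemma cmod_cexp x y : Cmod (cexp (x, y)) = exp x.
Proof.
  unfold Cmod, cexp; simpl.
  replace ((exp x * cos y) * ((exp x * cos y) * 1) + (exp x * sin y) * ((exp x * sin y) * 1))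
    with (Rsqr (exp x) * (Rsqr (sin y) + Rsqr (cos y))) by (unfold Rsqr; ring).
  rewrite sin2_cos2, Rmult_1_r. apply sqrt_Rsqr. left; apply exp_pos.
Qed.

Theorem mainTheorem6 (L : R) (gamma : Z -> R) (c : Z -> C)
  (alpha beta Cst : R) :
  0 < L ->
  (forall k : Z, 0 < gamma k) ->
  (* u0 in L^2(T): its Fourier coefficients are square summable *)
  ex_zseries (fun k => (Cmod (c k))^2) ->
  0 < alpha -> 0 < beta -> 0 < Cst ->
  (* (i) *)
  (forall k : Z, (Cmod (c k))^2 <= Cst * Rpower (gamma k) (2 * (alpha + beta))) ->
  (* (ii) *)
  ex_zseries (fun k => Rpower (1 + (freq L k)^2) (2 * alpha + 1)
                       * Rpower (gamma k) (2 * beta)) ->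
  forall t : R, 0 < t ->
    ex_zseries (H1_term L (sol_coef L gamma c t)) /\
    zSeries (H1_term L (sol_coef L gamma c t))
      <= Cst * exp (- (2 * alpha)) * Rpower (alpha / t) (2 * alpha)
         * zSeries (fun k => Rpower (1 + (freq L k)^2) (2 * alpha + 1)
                             * Rpower (gamma k) (2 * beta)).
Proof.
  intros HL Hg _ Ha Hb HC Hi Hii t Ht.
  set (K := Cst * exp (- (2 * alpha)) * Rpower (alpha / t) (2 * alpha)).
  set (g := fun k => Rpower (1 + (freq L k)^2) (2 * alpha + 1)
                       * Rpower (gamma k) (2 * beta)).
  assert (Hpt : forall k, 0 <= H1_term L (sol_coef L gamma c t) k <= K * g k).
  { intro k. unfold H1_term, sol_coef, g, K.
    set (q := 1 + freq L k ^ 2).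
    assert (Hq : 0 < q) by (unfold q; nra).
    rewrite Cmod_mult, cmod_cexp.
    split. { apply Rmult_le_pos; [lra|]. apply pow2_ge_0. }
    rewrite Rpower_plus, Rpower_1 by exact Hq.
    specialize (Hi k). rewrite Rmult_plus_distr_l, Rpower_plus in Hi.
    pose proof (key q (gamma k) t alpha Hq (Hg k) Ht Ha) as Hk.
    replace (- gamma k * t / q) with (- gamma k * t / q) in Hk by reflexivity.
    pose proof (exp_pos (- gamma k * t / q)) as He.
    assert (0 < Rpower (gamma k) (2 * beta)) by (unfold Rpower; apply exp_pos).
    assert (0 < Rpower (gamma k) (2 * alpha)) by (unfold Rpower; apply exp_pos).
    rewrite Rpow_mult_distr.
    apply Rle_trans with (q * (exp (- gamma k * t / q) ^ 2 *
       (Cst * (Rpower (gamma k) (2 * alpha) * Rpower (gamma k) (2 * beta))))).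
    { apply Rmult_le_compat_l; [lra|]. apply Rmult_le_compat_l; [nra|exact Hi]. }
    replace (q * (exp (- gamma k * t / q) ^ 2 *
       (Cst * (Rpower (gamma k) (2 * alpha) * Rpower (gamma k) (2 * beta)))))
      with ((q * Cst * Rpower (gamma k) (2 * beta)) *
            (exp (- gamma k * t / q) ^ 2 * Rpower (gamma k) (2 * alpha))) by ring.
    apply Rle_trans with ((q * Cst * Rpower (gamma k) (2 * beta)) *
      (exp (- (2 * alpha)) * Rpower (alpha / t) (2 * alpha) * Rpower q (2 * alpha))).
    { apply Rmult_le_compat_l; [|exact Hk]. nra. }
    right; ring. }
  assert (Hex : ex_series (fun n => K * zsplit g n)).
  { apply (ex_series_scal_l K (zsplit g)). exact Hii. }
  assert (Hpt2 : forall n, 0 <= zsplit (H1_term L (sol_coef L gamma c t)) n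
                              <= K * zsplit g n).
  { intro n; unfold zsplit. pose proof (Hpt (Z.of_nat n)). pose proof (Hpt (- Z.of_nat (S n))%Z).
    lra. }
  split.
  - unfold ex_zseries. apply (@ex_series_le R_AbsRing R_CompleteNormedModule _ (fun n => K * zsplit g n)); [|exact Hex].
    intro n. change (norm ?x) with (Rabs x); rewrite Rabs_pos_eq by apply Hpt2. apply Hpt2.
  - unfold zSeries. fold K. fold g. rewrite <- Series_scal_l.
    apply Series_le; [exact Hpt2|exact Hex].
Qed.
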